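(* Let $H$ be an Abelian group, $X$ a simplicial set, $\gamma:X_2\to H$ a normalized 2-cocycle and $\eta$ its associated twisting function. Let $\mathrm{No}(X,H,\gamma)$ be the set of normalized 1-cochains $\alpha:X_1\to H$ with $\partial\alpha=\gamma$. Then for every $\alpha\in\mathrm{No}(X,H,\gamma)$ there is a unique section $\varphi_\alpha$ of $\pi_\eta:N(H)\times_\eta X\to X$ given in degrees $0,1,2$ by $x\mapsto(0,x)$, $x\mapsto(\alpha(x),x)$, $x\mapsto((\alpha(d_2x),\alpha(d_1x)-\alpha(d_2x)),x)$, and the map $\mathrm{No}(X,H,\gamma)\to\mathrm{Sec}(\pi_\eta)$, $\alpha\mapsto\varphi_\alpha$, is a bijection.
   Context: $N(H)$ is the nerve of $H$: $N(H)_n=H^n$, $d_0$ drops the first entry, $d_n$ drops the last, $d_i$ for $0<i<n$ replaces $a_i,a_{i+1}$ by $a_i+a_{i+1}$, $s_j$ inserts $0$ after the $j$-th entry. A normalized $k$-cochain is a function $X_k\to H$ vanishing on degenerate simplices; $\partial\alpha(x)=\alpha(d_0x)-\alpha(d_1x)+\alpha(d_2x)$; a normalized 2-cocycle is a normalized 2-cochain $\gamma$ with $\sum_{i=0}^3(-1)^i\gamma(d_i\sigma)=0$ for $\sigma\in X_3$. The associated twisting function: $\eta_1=0$, $\eta_2=\gamma$, $\eta_n(x)=(\gamma(d_3\cdots d_nx),\eta_{n-1}(d_1x)-\eta_{n-1}(d_0x))\in H^{n-1}$. $N(H)\times_\eta X$ has $n$-simplices $H^n\times X_n$, $d_0(g,x)=(d_0g+\eta_n(x),d_0x)$,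 other faces and degeneracies componentwise; $\pi_\eta$ is the projection; $\mathrm{Sec}(\pi_\eta)$ is the set of simplicial maps $s:X\to N(H)\times_\eta X$ with $\pi_\eta s=\mathrm{id}$. *)

(* Defs.v *)
From HB Require Import structures.
From mathcomp Require Import all_boot all_order all_algebra.
Set Implicit Arguments. Unset Strict Implicit. Unset Printing Implicit Defensive.
Import GRing.Theory.
Local Open Scope ring_scope.

(* Graded sets with face and degeneracy operators:
   fc n i : X_{n+1} -> X_n  is d_i   (meaningful for i <= n+1),
   dg n j : X_n -> X_{n+1}  is s_j   (meaningful for j <= n). *)
Record ssdata := SSData {
  obj :> nat -> Type;
  fc : forall n : nat, nat -> obj n.+1 -> obj n;
  dg : forall n : nat, nat -> obj n -> obj n.+1 }.

Arguments obj s n%_nat_scope.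
Arguments fc s n%_nat_scope i%_nat_scope _.
Arguments dg s n%_nat_scope j%_nat_scope _.

Definition is_simplicial (X : ssdata) : Prop :=
  [/\ (forall n i j (x : X n.+2), (i < j)%N -> (j <= n.+2)%N ->
          fc i (fc j x) = fc (j.-1) (fc i x)),
      (forall n i j (x : X n.+1), (i < j)%N -> (j <= n.+1)%N ->
          fc i (dg j x) = dg (j.-1) (fc i x)),
      (forall n j (x : X n), (j <= n)%N -> fc j (dg j x) = x /\ fc j.+1 (dg j x) = x),
      (forall n i j (x : X n.+1), (j.+1 < i)%N -> (i <= n.+2)%N ->
          fc i (dg j x) = dg j (fc (i.-1) x))
    & (forall n i j (x : X n), (i <= j)%N -> (j <= n)%N ->
          dg i (dg j x) = dg j.+1 (dg i x))].
Arguments fc {s n}.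
Arguments dg {s n}.

Definition is_smap (X Y : ssdata) (f : forall n, X n -> Y n) : Prop :=
  (forall n i (x : X n.+1), (i <= n.+1)%N -> f n (fc i x) = fc i (f n.+1 x)) /\
  (forall n j (x : X n), (j <= n)%N -> f n.+1 (dg j x) = dg j (f n x)).

Section Nerve.
Variable H : zmodType.

(* k-th entry (0-based) of an element of H^n, 0 if out of range *)
Definition ent n (g : {ffun 'I_n -> H}) (k : nat) : H :=
  oapp g 0 (insub k : option 'I_n).

(* d_i on N(H)_{n+1} = H^{n+1}: d_0 drops first, d_{n+1} drops last,
   0<i<n+1 replaces a_i, a_{i+1} (1-based) by a_i + a_{i+1}. *)
Definition nface n (i : nat) (g : {ffun 'I_n.+1 -> H}) : {ffun 'I_n -> H} :=
  [ffun j : 'I_n => if (j.+1 < i)%N then ent g j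
                    else if j.+1 == i then ent g j + ent g j.+1
                    else ent g j.+1].

(* s_j inserts 0 after the j-th entry (1-based). *)
Definition ndegen n (j : nat) (g : {ffun 'I_n -> H}) : {ffun 'I_n.+1 -> H} :=
  [ffun k : 'I_n.+1 => if (k < j)%N then ent g k else if k == j :> nat then 0
                       else ent g k.-1].

Definition Nerve : ssdata := @SSData (fun n => {ffun 'I_n -> H}) nface ndegen.

Definition tcons n (h : H) (g : {ffun 'I_n -> H}) : {ffun 'I_n.+1 -> H} :=
  [ffun k : 'I_n.+1 => if k == 0%N :> nat then h else ent g k.-1].

Definition tsub n (f g : {ffun 'I_n -> H}) : {ffun 'I_n -> H} :=
  [ffun k => f k - g k].
Definition tadd n (f g : {ffun 'I_n -> H}) : {ffun 'I_n -> H} :=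
  [ffun k => f k + g k].
End Nerve.

Section Twist.
Variables (H : zmodType) (X : ssdata).

Definition normalized1 (a : X 1 -> H) : Prop := forall y : X 0, a (dg 0 y) = 0.
Definition normalized2 (c : X 2 -> H) : Prop :=
  forall (y : X 1) j, (j <= 1)%N -> c (dg j y) = 0.
Definition cocycle2 (c : X 2 -> H) : Prop :=
  forall s : X 3, c (fc 0 s) - c (fc 1 s) + c (fc 2 s) - c (fc 3 s) = 0.
Definition cobound1 (a : X 1 -> H) (x : X 2) : H :=
  a (fc 0 x) - a (fc 1 x) + a (fc 2 x).

Local Unset Implicit Arguments.
Fixpoint lastfaces (k : nat) : X k.+2 -> X 2 :=
  match k return X k.+2 -> X 2 with
  | 0 => fun x => x
  | k'.+1 => fun x => lastfaces k' (fc k'.+3 x)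
  end.

Variable gamma : X 2 -> H.

(* twist k = eta_{k+1} : X_{k+1} -> H^k.
   eta_1 = 0, eta_{n}(x) = (gamma(d_3...d_n x), eta_{n-1}(d_1 x) - eta_{n-1}(d_0 x)),
   which for n = 2 gives eta_2 = gamma. *)
Fixpoint twist (k : nat) : X k.+1 -> {ffun 'I_k -> H} :=
  match k return X k.+1 -> {ffun 'I_k -> H} with
  | 0 => fun _ => [ffun i => 0]
  | k'.+1 => fun x => tcons (gamma (lastfaces k' x))
                        (tsub (twist k' (fc 1 x)) (twist k' (fc 0 x)))
  end.

Local Set Implicit Arguments.
Definition tw_face n (i : nat) (p : {ffun 'I_n.+1 -> H} * X n.+1)
  : {ffun 'I_n -> H} * X n :=
  if i == 0%N then (tadd (nface 0%N p.1) (twist n p.2), fc 0 p.2)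
  else (nface i p.1, fc i p.2).
Definition tw_degen n (j : nat) (p : {ffun 'I_n -> H} * X n)
  : {ffun 'I_n.+1 -> H} * X n.+1 := (ndegen j p.1, dg j p.2).

Definition TwProd : ssdata :=
  @SSData (fun n => ({ffun 'I_n -> H} * X n)%type) tw_face tw_degen.

Definition proj_eta : forall n, TwProd n -> X n := fun n p => p.2.

Definition is_section (phi : forall n, X n -> TwProd n) : Prop :=
  @is_smap X TwProd phi /\ forall n x, proj_eta (phi n x) = x.

Definition No (a : X 1 -> H) : Prop :=
  normalized1 a /\ forall x : X 2, cobound1 a x = gamma x.

Definition low_formulas (a : X 1 -> H) (phi : forall n, X n -> TwProd n) : Prop :=
  [/\ forall x : X 0, phi 0%N x = ([ffun _ => 0], x),
      forall x : X 1, phi 1%N x = ([ffun _ => a x], x)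
    & forall x : X 2, phi 2%N x =
        ([ffun j : 'I_2 => if val j == 0%N then a (fc 2 x)
                           else a (fc 1 x) - a (fc 2 x)], x)].
End Twist.

(* Main.v *)
Require Import Defs.
From mathcomp Require Import all_boot all_order all_algebra.
From mathcomp Require Import zify.
From Stdlib Require Import FunctionalExtensionality.
Set Implicit Arguments. Unset Strict Implicit. Unset Printing Implicit Defensive.
Import GRing.Theory.

Section Simp.
Variable X : ssdata.
Hypothesis hX : is_simplicial X.

Lemma ff n i j (x : X n.+2) : (i < j)%N -> (j <= n.+2)%N -> fc i (fc j x) = fc j.-1 (fc i x).
Proof. by case: hX => h _ _ _ _; apply: h. Qed.
Lemma fd n i j (x : X n.+1) : (i < j)%N -> (j <= n.+1)%N -> fc i (dg j x) = dg j.-1 (fc i x).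
Proof. by case: hX => _ h _ _ _; apply: h. Qed.
Lemma fdid n j (x : X n) : (j <= n)%N -> fc j (dg j x) = x.
Proof. by case: hX => _ _ h _ _ hj; case: (h n j x hj). Qed.
Lemma fdidS n j (x : X n) : (j <= n)%N -> fc j.+1 (dg j x) = x.
Proof. by case: hX => _ _ h _ _ hj; case: (h n j x hj). Qed.
Lemma fdgt n i j (x : X n.+1) : (j.+1 < i)%N -> (i <= n.+2)%N -> fc i (dg j x) = dg j (fc i.-1 x).
Proof. by case: hX => _ _ _ h _; apply: h. Qed.

Local Unset Implicit Arguments.
Fixpoint E (n k : nat) : X n.+1 -> X 1 :=
  match n return X n.+1 -> X 1 with
  | 0 => fun x => x
  | n'.+1 => fun x => if k == n'.+1 then E n' n' (fc 1 x) else E n' k (fc n'.+2 x)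
  end.
Local Set Implicit Arguments.

Lemma E_S n k (x : X n.+2) : E n.+1 k x = if k == n.+1 then E n n (fc 1 x) else E n k (fc n.+2 x).
Proof. by []. Qed.

Lemma E_fc n : forall i k (x : X n.+2), (1 <= i)%N -> (i <= n.+2)%N -> (k <= n)%N ->
  E n k (fc i x) = E n.+1 (if (k.+1 < i)%N then k else k.+1) x.
Proof.
elim: n => [|m IH] i k x hi1 hi2 hk.
  have -> : k = 0%N by lia.
  case: i hi1 hi2 => [|[|[|i]]] //= _ _; lia.
rewrite E_S [RHS]E_S.
case: (boolP (k == m.+1)) => [/eqP ->|/eqP hkm].
  case: (boolP (i == m.+3)) => [/eqP ->|/eqP him].
    rewrite (_ : (if _ then _ else _) = m.+1); last by case: ifP; lia.
    rewrite ifN; last by lia.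
    by rewrite E_S eqxx.
  rewrite (_ : (if _ then _ else _) = m.+2); last by case: ifP; lia.
  rewrite eqxx.
  case: (boolP (i == 1%N)) => [/eqP ->|/eqP hi]; first by rewrite [RHS]E_S eqxx.
  rewrite ff; [|lia|lia].
  rewrite IH; [|lia|lia|lia].
  by rewrite (_ : (if _ then _ else _) = m.+1) //; case: ifP; lia.
have hk' : (k <= m)%N by lia.
rewrite ifN; last by case: ifP; lia.
case: (boolP (i == m.+3)) => [/eqP ->|/eqP him].
  rewrite (_ : (if _ then _ else _) = k); last by case: ifP; lia.
  by rewrite [RHS]E_S ifN //; apply/eqP.
rewrite -(@ff _ i m.+3); [|lia|lia].
by rewrite IH; [|lia|lia|lia].
Qed.

Local Unset Implicit Arguments.
Fixpoint Tri (n k : nat) : X n.+2 -> X 2 :=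
  match n return X n.+2 -> X 2 with
  | 0 => fun x => x
  | n'.+1 => fun x => if k == n'.+1 then Tri n' n' (fc 2 x) else Tri n' k (fc n'.+3 x)
  end.
Fixpoint Tet (n k : nat) : X n.+3 -> X 3 :=
  match n return X n.+3 -> X 3 with
  | 0 => fun x => x
  | n'.+1 => fun x => if k == n'.+1 then Tet n' n' (fc 3 x) else Tet n' k (fc n'.+4 x)
  end.
Local Set Implicit Arguments.

Lemma Tri_S n k (x : X n.+3) : Tri n.+1 k x = if k == n.+1 then Tri n n (fc 2 x) else Tri n k (fc n.+3 x).
Proof. by []. Qed.
Lemma Tet_S n k (x : X n.+4) : Tet n.+1 k x = if k == n.+1 then Tet n n (fc 3 x) else Tet n k (fc n.+4 x).
Proof. by []. Qed.

Lemma Tri_fc0 n : forall k (x : X n.+2), (k <= n)%N -> fc 0 (Tri n k x) = E n k (fc 0 x).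
Proof.
elim: n => [|m IH] k x hk; first by [].
rewrite Tri_S E_S; case: (boolP (k == m.+1)) => [_|/eqP hkm].
  by rewrite IH // ff.
by rewrite IH; [rewrite (@ff _ 0 m.+3)|lia].
Qed.

Lemma Tri_fc1 n : forall k (x : X n.+2), (k <= n)%N -> fc 1 (Tri n k x) = E n.+1 k.+1 x.
Proof.
elim: n => [|m IH] k x hk.
  by have -> : k = 0%N by lia.
rewrite Tri_S [RHS]E_S; case: (boolP (k == m.+1)) => [/eqP ->|/eqP hkm].
  by rewrite eqxx IH // !E_S !eqxx (@ff _ 1 2).
by rewrite ifN; [rewrite IH; [|lia]|apply/eqP; lia].
Qed.

Lemma Tri_fc2 n : forall k (x : X n.+2), fc 2 (Tri n k x) = E n.+1 0 x.
Proof.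
elim: n => [|m IH] k x; first by [].
rewrite Tri_S; case: ifP => _; rewrite IH E_fc //; lia.
Qed.

Lemma lastfaces_Tri n : forall (x : X n.+2), lastfaces X n x = Tri n 0 x.
Proof. by elim: n => [|m IH] x //=; rewrite IH. Qed.

Lemma Tri0_fc n : forall i (x : X n.+3), (3 <= i)%N -> (i <= n.+3)%N -> Tri n 0 (fc i x) = Tri n.+1 0 x.
Proof.
elim: n => [|m IH] i x hi1 hi2.
  by have -> : i = 3%N by lia.
rewrite [RHS]Tri_S /=.
case: (boolP (i == m.+4)) => [/eqP ->//|/eqP him].
rewrite -(@ff _ i m.+4); [|lia|lia].
by rewrite IH; [|lia|lia].
Qed.

Lemma Tet_fc01 n : forall i k (x : X n.+3), (i <= 1)%N -> (k <= n)%N -> fc i (Tet n k x) = Tri n k (fc i x).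
Proof.
elim: n => [|m IH] i k x hi hk; first by [].
rewrite Tet_S Tri_S; case: (boolP (k == m.+1)) => [/eqP hk1|/eqP hkm].
  by rewrite IH // (@ff _ i 3) //; lia.
by rewrite IH; [rewrite (@ff _ i m.+4) //; lia|lia|lia].
Qed.

Lemma Tet_fc2 n : forall k (x : X n.+3), (k <= n)%N -> fc 2 (Tet n k x) = Tri n.+1 k.+1 x.
Proof.
elim: n => [|m IH] k x hk.
  by have -> : k = 0%N by lia.
rewrite Tet_S [RHS]Tri_S; case: (boolP (k == m.+1)) => [/eqP ->|/eqP hkm].
  by rewrite eqxx IH // !Tri_S !eqxx (@ff _ 2 3).
by rewrite ifN; [rewrite IH; [|lia]|apply/eqP; lia].
Qed.

Lemma Tet_fc3 n : forall k (x : X n.+3), fc 3 (Tet n k x) = Tri n.+1 0 x.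
Proof.
elim: n => [|m IH] k x; first by [].
rewrite Tet_S; case: ifP => _; rewrite IH Tri0_fc //; lia.
Qed.

Section Alpha.
Local Open Scope ring_scope.
Variable H : zmodType.
Variable a : X 1 -> H.
Hypothesis an : forall y, a (dg 0 y) = 0.

Lemma E_dg n : forall j k (x : X n.+1), (j <= n.+1)%N -> (k <= n.+1)%N ->
  a (E n.+1 k (dg j x)) = if (k < j)%N then a (E n k x) else if k == 0%N then 0 else a (E n k.-1 x).
Proof.
elim: n => [|m IH] j k x hj hk.
  rewrite E_S; case: (boolP (k == 1%N)) => [/eqP ->|/eqP hk1].
    rewrite ifN; last by lia.
    case: (boolP (j == 0%N)) => [/eqP ->|/eqP hj0]; first by rewrite fdidS.
    have hj1 : j = 1%N by lia.
    by rewrite hj1 fdid.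
  have -> : k = 0%N by lia.
  case: (boolP (j == 1%N)) => [/eqP ->|/eqP hj1]; first by rewrite fdidS.
  have -> : j = 0%N by lia.
  by rewrite (@fdgt _ 2 0) //= an.
rewrite E_S; case: (boolP (k == m.+2)) => [/eqP ->|/eqP hk1].
  rewrite ifN; last by lia.
  case: (boolP (j == 0%N)) => [/eqP ->|/eqP hj0]; first by rewrite fdidS.
  case: (boolP (j == 1%N)) => [/eqP ->|/eqP hj1]; first by rewrite fdid.
  rewrite (@fd _ 1 j); [|lia|lia].
  rewrite IH; [|lia|lia].
  rewrite ifN; last by lia.
  change (a (E m m (fc 1 x)) = a (E m.+1 m.+1 x)).
  by rewrite (@E_S m m.+1) eqxx.
case: (boolP (j == m.+2)) => [/eqP ->|/eqP hjm].
  by rewrite fdidS // ifT //; lia.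
rewrite (@fdgt _ m.+3 j); [|lia|lia].
rewrite IH; [|lia|lia].
case: ifP => hkj.
  by rewrite E_S ifN //; apply/eqP; lia.
case: ifP => // hk0.
by rewrite E_S ifN //; apply/eqP; lia.
Qed.
End Alpha.

Section Main.
Local Open Scope ring_scope.
Variable H : zmodType.
Implicit Types A B C D p q r s u t b c e d f g : H.
Lemma Z5 a b c : (b - a) + (c - b) = c - a.
Proof. by rewrite addrC addrA subrK. Qed.
Lemma Z1 A B C D : A - B + C - D = 0 -> B - A = C - D.
Proof. move=> h; have: (C - D) + (A - B) == 0 by rewrite addrC addrA h.
by rewrite addr_eq0 opprB => /eqP ->. Qed.
Lemma Z2 p1 q1 r1 p0 q0 r0 s : p1 - q1 = r1 - s -> p0 - q0 = r0 - s -> (p1 - p0) - (q1 - q0) = r1 - r0.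
Proof. move=> e1 e0. rewrite opprB (addrC q0 (-q1)) addrACA e1 (addrC (-p0) q0) -(opprB p0 q0) e0.
by rewrite opprB subrKA. Qed.
Lemma Z3 u1 u0 a1 a0 c t1 t0 : u1 = a1 - c + t1 -> u0 = a0 - c + t0 -> u1 - u0 = (a1 - a0) + (t1 - t0).
Proof. move=> -> ->. by rewrite opprD addrACA opprB subrKA. Qed.
Lemma Z4 f e d g : f - e + d = g -> f = e - d + g.
Proof. move=> <-. by rewrite addrC -addrA (addrC d) !subrK. Qed.

Lemma Z6 e0 e1 g : (e1 + g) - (e0 + e1) + e0 = g.
Proof. by rewrite (addrC e0) opprD addrA subrK addrC addKr. Qed.

Lemma entE n (g : {ffun 'I_n -> H}) k (hk : (k < n)%N) : ent g k = g (Ordinal hk).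
Proof.
rewrite /ent; case: insubP => [u _ hu|]; last by rewrite hk.
by congr (g _); apply: val_inj.
Qed.

Lemma ffent n (f g : {ffun 'I_n -> H}) : (forall k, (k < n)%N -> ent f k = ent g k) -> f = g.
Proof.
move=> h; apply/ffunP => i; have := h i (ltn_ord i); rewrite !entE.
by have -> : Ordinal (ltn_ord i) = i by apply: val_inj.
Qed.

Lemma ent_tcons n h (g : {ffun 'I_n -> H}) k : (k < n.+1)%N ->
  ent (tcons h g) k = if k == 0%N then h else ent g k.-1.
Proof. by move=> hk; rewrite entE ffunE. Qed.
Lemma ent_tsub n (f g : {ffun 'I_n -> H}) k : (k < n)%N -> ent (tsub f g) k = ent f k - ent g k.
Proof. by move=> hk; rewrite !entE ffunE. Qed.
Lemma ent_tadd n (f g : {ffun 'I_n -> H}) k : (k < n)%N -> ent (tadd f g) k = ent f k + ent g k.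
Proof. by move=> hk; rewrite !entE ffunE. Qed.
Lemma ent_nface n i (g : {ffun 'I_n.+1 -> H}) k : (k < n)%N ->
  ent (nface i g) k = if (k.+1 < i)%N then ent g k else if k.+1 == i then ent g k + ent g k.+1
                    else ent g k.+1.
Proof. by move=> hk; rewrite entE ffunE. Qed.
Lemma ent_ndegen n j (g : {ffun 'I_n -> H}) k : (k < n.+1)%N ->
  ent (ndegen j g) k = if (k < j)%N then ent g k else if k == j then 0 else ent g k.-1.
Proof. by move=> hk; rewrite entE ffunE. Qed.

Variable gamma : X 2 -> H.
Hypothesis gcoc : cocycle2 gamma.

Definition Tf n (x : X n.+2) (m : nat) : H := if m is m'.+1 then gamma (Tri n m' x) else 0.

Lemma TfD m (x : X m.+3) j : (j <= m.+1)%N -> Tf (fc 1 x) j - Tf (fc 0 x) j = Tf x j.+1 - Tf x 1.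
Proof.
case: j => [|j] hj /=; first by rewrite !subrr.
apply: Z1; have := gcoc (Tet m j x).
by rewrite Tet_fc01 // Tet_fc01 // Tet_fc2 // Tet_fc3.
Qed.

Lemma twist_ent n : forall (x : X n.+2) k, (k <= n)%N ->
  ent (twist H X gamma n.+1 x) k = Tf x k.+1 - Tf x k.
Proof.
elim: n => [|m IH] x k hk.
  have -> : k = 0%N by lia.
  by rewrite ent_tcons //= subr0.
change (twist H X gamma m.+2 x) with (tcons (gamma (lastfaces X m.+1 x))
   (tsub (twist H X gamma m.+1 (fc 1 x)) (twist H X gamma m.+1 (fc 0 x)))).
rewrite ent_tcons //; case: k hk => [|k] hk /=.
  by rewrite lastfaces_Tri subr0.
rewrite ent_tsub // !IH //.
apply: (@Z2 _ _ _ _ _ _ (Tf x 1)); apply: TfD; lia.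
Qed.

Variable a : X 1 -> H.
Hypothesis an : normalized1 a.
Hypothesis acob : forall x, cobound1 a x = gamma x.

Definition Af n (x : X n.+1) (m : nat) : H := if m is m'.+1 then a (E n m' x) else 0.
Definition G n (x : X n.+1) : {ffun 'I_n.+1 -> H} := [ffun k : 'I_n.+1 => Af x k.+1 - Af x k].

Lemma entG n (x : X n.+1) k : (k <= n)%N -> ent (G x) k = Af x k.+1 - Af x k.
Proof. by move=> hk; rewrite entE ffunE. Qed.

Lemma Af_fc0 n (x : X n.+2) m : (m <= n.+1)%N -> Af (fc 0 x) m = Af x m.+1 - Af x 1 + Tf x m.
Proof.
case: m => [|m] hm /=; first by rewrite subrr addr0.
apply: Z4; have := acob (Tri n m x).
by rewrite /cobound1 Tri_fc0 // Tri_fc1 // Tri_fc2.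
Qed.

Lemma Af_fc n (x : X n.+2) i m : (1 <= i)%N -> (i <= n.+2)%N -> (m <= n.+1)%N ->
  Af (fc i x) m = Af x (if (m < i)%N then m else m.+1).
Proof.
move=> hi1 hi2; case: m => [|m] hm; first by rewrite ifT.
rewrite /= E_fc; [|lia|lia|lia].
by case: ifP.
Qed.

Lemma Af_dg n (x : X n.+1) j m : (j <= n.+1)%N -> (m <= n.+2)%N ->
  Af (dg j x) m = Af x (if (m <= j)%N then m else m.-1).
Proof.
move=> hj; case: m => [|m] hm; first by [].
rewrite /= (E_dg an); [|lia|lia].
case: ifP => // _; by case: m {hm}.
Qed.

Definition phi : forall n, X n -> TwProd gamma n :=
  fun n => match n return X n -> TwProd gamma n with
  | 0 => fun x => ([ffun _ => 0], x)
  | n'.+1 => fun x => (G x, x)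
  end.

Lemma phi_fc n i (x : X n.+1) : (i <= n.+1)%N -> phi (fc i x) = tw_face gamma i (phi x).
Proof.
case: n x => [|n] x hi.
  rewrite /tw_face /=; case: eqP => [->|_]; congr pair; apply/ffunP => -[] //.
rewrite /tw_face /=; case: eqP => [->|/eqP hi0].
  congr pair; apply: ffent => k hk.
  rewrite entG; last by lia.
  rewrite ent_tadd // ent_nface // twist_ent; last by lia.
  rewrite /= entG; last by lia.
  by apply: (Z3 (Af_fc0 (m:=k.+1) x _) (Af_fc0 (m:=k) x _)); lia.
congr pair; apply: ffent => k hk.
rewrite entG; last by lia.
rewrite ent_nface // !Af_fc; try lia.
case: (ltnP k.+1 i) => h1.
  have -> : (k < i)%N = true by lia.
  by rewrite entG //; lia.
case: (boolP (k.+1 == i)) => [/eqP h2|/eqP h2].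
  have -> : (k < i)%N = true by lia.
  by rewrite !entG; [rewrite Z5| lia | lia].
have -> : (k < i)%N = false by lia.
by rewrite entG.
Qed.

Lemma phi_dg n j (x : X n) : (j <= n)%N -> phi (dg j x) = tw_degen j (phi x).
Proof.
case: n x => [|n] x hj.
  have -> : j = 0%N by lia.
  rewrite /tw_degen /=; congr pair; apply: ffent => k hk.
  have -> : k = 0%N by lia.
  by rewrite entG // ent_ndegen //= an subr0.
rewrite /tw_degen /=; congr pair; apply: ffent => k hk.
rewrite entG // ent_ndegen // !Af_dg; try lia.
case: (ltnP k j) => h1.
  have -> : (k <= j)%N = true by lia.
  by rewrite entG //; lia.
case: (boolP (k == j)) => [/eqP h2|/eqP h2].
  have -> : (k <= j)%N = true by lia.
  by rewrite subrr.
have -> : (k <= j)%N = false by lia.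
rewrite entG; last by lia.
by rewrite prednK //; lia.
Qed.

Lemma phi_section : is_section phi.
Proof.
split; last by case.
split => n.
  by move=> i x hi; rewrite phi_fc.
by move=> j x hj; rewrite phi_dg.
Qed.

Lemma phi_low : low_formulas a phi.
Proof.
split => x //=.
  congr pair; apply/ffunP => k; rewrite !ffunE.
  by case: k => -[|k] hk //=; rewrite subr0.
congr pair; apply/ffunP => k; rewrite !ffunE.
by case: k => -[|[|k]] hk //=; rewrite subr0.
Qed.
End Main.

Lemma sec_eq (H : zmodType) (gamma : X 2 -> H) (psi psi' : forall n, X n -> TwProd gamma n) :
  is_section psi -> is_section psi' -> (forall x, psi 1%N x = psi' 1%N x) ->
  forall n x, psi n x = psi' n x.
Proof.
move=> [[pf _] pp] [[pf' _] pp'] h1 n.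
have h0 : forall x, psi 0%N x = psi' 0%N x.
  move=> x; rewrite [psi 0%N x]surjective_pairing [psi' 0%N x]surjective_pairing.
  have := pp 0%N x; have := pp' 0%N x; rewrite /proj_eta => -> ->.
  by congr pair; apply/ffunP => -[].
elim: n => [|n IH] //; case: n IH => [|m] IH //.
move=> x.
have e2 := pp m.+2 x; have e2' := pp' m.+2 x; rewrite /proj_eta in e2 e2'.
have ef i : (i <= m.+2)%N -> tw_face gamma i (psi m.+2 x) = tw_face gamma i (psi' m.+2 x).
  by move=> hi; rewrite -[LHS](pf m.+1 i x hi) -[RHS](pf' m.+1 i x hi) IH.
rewrite [psi m.+2 x]surjective_pairing [psi' m.+2 x]surjective_pairing e2 e2'.
congr pair.
have E0 := ef 0%N isT; have Em := ef m.+2 (leqnn _).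
rewrite /tw_face /= in E0 Em.
case: E0 => E0 _; case: Em => Em _.
rewrite e2 e2' in E0.
apply: ffent => k hk.
case: (ltnP k m.+1) => hkm.
  have := congr1 (fun f => ent f k) Em; rewrite /= !ent_nface //.
  by rewrite !ifT.
have := congr1 (fun f => ent f k.-1) E0; rewrite /= !ent_tadd; try lia.
rewrite !ent_nface; try lia.
rewrite prednK; last by lia.
rewrite /=.
rewrite !ifN; [|apply/eqP; lia|apply/eqP; lia].
by move/addIr.
Qed.
End Simp.

Lemma pairE (A B : Type) (p : A * B) a b : p.1 = a -> p.2 = b -> p = (a, b).
Proof. by case: p => ? ? /= -> ->. Qed.

Theorem mainTheorem8 (H : zmodType) (X : ssdata) (gamma : X 2 -> H) :
  is_simplicial X ->
  normalized2 gamma -> cocycle2 gamma ->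
  (* each alpha in No(X,H,gamma) gives a unique section phi_alpha *)
  (forall a : X 1 -> H, No gamma a ->
     exists! phi : forall n, X n -> TwProd gamma n,
       is_section phi /\ low_formulas a phi) /\
  (* alpha |-> phi_alpha is a bijection No -> Sec *)
  (forall phi : forall n, X n -> TwProd gamma n, is_section phi ->
     exists! a : X 1 -> H, No gamma a /\ low_formulas a phi).
Proof.
move=> hX _ hcoc; split.
  move=> a [an acob].
  have ps := phi_section hX hcoc an acob.
  exists (fun n => @phi X H gamma a n); split; first by split; [exact: ps|exact: phi_low].
  move=> psi [psec plow].
  apply: functional_extensionality_dep => n; apply: functional_extensionality => x.
  apply: (sec_eq ps psec) => y.
  by have [_ -> _] := phi_low gamma a; have [_ -> _] := plow.
move=> psi psec.
have [[pf pd] pp] := psec.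
have p2 : forall n x, (psi n x).2 = x by exact: pp.
exists (fun x => (psi 1%N x).1 ord0); split.
  split.
    split.
      move=> y; rewrite (pd 0%N 0%N y) //= /tw_degen /= ffunE //.
    move=> x.
    have f0 := pf 1%N 0%N x isT; have f1 := pf 1%N 1%N x isT; have f2 := pf 1%N 2%N x isT.
    rewrite /cobound1 f0 f1 f2 /= /tw_face /= !ffunE /= p2.
    exact: Z6.
  split => x.
  - apply: (@pairE {ffun 'I_0 -> H} (X 0%N)); rewrite ?p2 //; apply/ffunP => -[m i]; by case: m i.
  - apply: (@pairE {ffun 'I_1 -> H} (X 1%N)); rewrite ?p2 //; apply/ffunP => k.
    by rewrite ffunE (ord1 k).
  - rewrite (pf 1%N 2%N x isT) (pf 1%N 1%N x isT) /= /tw_face /= !ffunE /=.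
    apply: (@pairE {ffun 'I_2 -> H} (X 2%N)); rewrite ?p2 //; apply/ffunP => j; rewrite ffunE.
    case: j => -[|[|j]] hj //=.
      by rewrite entE; congr ((psi 2%N x).1 _); apply: val_inj.
    rewrite (addrC (ent _ 0%N)) addrK entE; congr ((psi 2%N x).1 _); apply: val_inj.
move=> b [_ [_ hb _]].
apply: functional_extensionality => x.
by rewrite hb ffunE.
Qed.
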